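(* Let $W=q^{\Delta^2/2}\Gamma'_{-}(Qq^{-\rho})^{-1}\Gamma_{-}(q^{-\rho})^{-1}q^{-\Delta^2/2}$ and $L=W\Lambda W^{-1}$. Then $$L=(\Lambda-q^\Delta)(1+Qq^{\Delta-1}\Lambda^{-1})^{-1}=(1+Qq^{\Delta}\Lambda^{-1})^{-1}(\Lambda-q^\Delta),$$ where $(1+Qq^{\Delta-1}\Lambda^{-1})^{-1}=\sum_{n\ge0}(-Qq^{\Delta-1}\Lambda^{-1})^n$ and similarly for $(1+Qq^\Delta\Lambda^{-1})^{-1}$.
   Context: Let $0<|q|<1$, $0<|Q|<1$, with a fixed $q^{1/2}$. Work with $\mathbb{Z}\times\mathbb{Z}$ matrices; $\Delta=\sum_{i\in\mathbb{Z}}iE_{ii}$, $\Lambda=\sum_{i\in\mathbb{Z}}E_{i,i+1}$, $f(\Delta)=\sum_if(i)E_{ii}$ (e.g. $q^{\Delta}$, $q^{\Delta-1}$, $q^{\Delta^2/2}=\sum_iq^{i^2/2}E_{ii}$). For a parameter $a$, $\Gamma_{-}(aq^{-\rho})=\prod_{i\ge1}(1-aq^{i-1/2}\Lambda^{-1})^{-1}$ with $(1-x\Lambda^{-1})^{-1}=\sum_{n\ge0}x^n\Lambda^{-n}$, and $\Gamma'_{-}(aq^{-\rho})=\prod_{i\ge1}(1+aq^{i-1/2}\Lambda^{-1})$; $\Gamma_-(q^{-\rho})$ means $a=1$. Inverses are taken within lower triangular matrices. *)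

(* Defs.v *)
From HB Require Import structures.
From mathcomp Require Import all_boot all_order all_algebra.
From Stdlib Require Import ClassicalEpsilon.
Set Implicit Arguments.
Unset Strict Implicit.
Unset Printing Implicit Defensive.
Import Order.TTheory GRing.Theory Num.Theory.
Local Open Scope ring_scope.

Section ZMatrices.
Variable R : numFieldType.

Definition zmat := int -> int -> R.

Definition cvg (u : nat -> R) (l : R) : Prop :=
  forall eps : R, 0 < eps ->
    exists N : nat, forall n : nat, (N <= n)%N -> `|u n - l| < eps.

Definition lim (u : nat -> R) : R := epsilon (inhabits 0) (cvg u).

(* sum over k in Z, as limit of symmetric partial sums over [-N, N] *)
Definition zsum (f : int -> R) : R :=
  lim (fun N : nat => \sum_(k < (N.*2).+1) f (k%:Z - N%:Z)).

Definition zmul (A B : zmat) : zmat := fun i j => zsum (fun k => A i k * B k j).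
Definition zadd (A B : zmat) : zmat := fun i j => A i j + B i j.
Definition zsub (A B : zmat) : zmat := fun i j => A i j - B i j.
Definition zscale (c : R) (A : zmat) : zmat := fun i j => c * A i j.
Definition zone : zmat := fun i j => (i == j)%:R.

(* f(Delta) = sum_i f(i) E_ii *)
Definition zdiag (f : int -> R) : zmat := fun i j => if i == j then f i else 0.
(* Lambda = sum_i E_{i,i+1},  Lambda^{-1} = sum_i E_{i+1,i} *)
Definition Lam : zmat := fun i j => (j == i + 1)%:R.
Definition LamInv : zmat := fun i j => (i == j + 1)%:R.

Definition lower (A : zmat) : Prop := forall i j : int, i < j -> A i j = 0.

Definition zinv (A : zmat) : zmat :=
  epsilon (inhabits zone)
    (fun B => lower B /\ zmul A B = zone /\ zmul B A = zone).

Fixpoint zpow (A : zmat) (n : nat) : zmat :=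
  match n with 0%N => zone | n'.+1 => zmul (zpow A n') A end.

Definition zlim (A : nat -> zmat) : zmat := fun i j => lim (fun N => A N i j).

Definition zseries (A : nat -> zmat) : zmat :=
  zlim (fun N => fun i j => \sum_(n < N) A n i j).

Fixpoint zprodN (F : nat -> zmat) (N : nat) : zmat :=
  match N with 0%N => zone | N'.+1 => zmul (zprodN F N') (F N) end.

Definition zinfprod (F : nat -> zmat) : zmat := zlim (zprodN F).

(* Gamma_-(a q^{-rho}) = prod_{i>=1} (1 - a q^{i-1/2} Lambda^{-1})^{-1},
   with (1 - x Lambda^{-1})^{-1} = sum_{n>=0} x^n Lambda^{-n};
   here s = q^{1/2}, so q^{i-1/2} = s^(2i-1). *)
Definition Gamma_minus (s a : R) : zmat :=
  zinfprod (fun i => zseries (fun n =>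
     zscale ((a * s ^+ (i.*2).-1) ^+ n) (zpow LamInv n))).

(* Gamma'_-(a q^{-rho}) = prod_{i>=1} (1 + a q^{i-1/2} Lambda^{-1}) *)
Definition Gammap_minus (s a : R) : zmat :=
  zinfprod (fun i => zadd zone (zscale (a * s ^+ (i.*2).-1) LamInv)).

End ZMatrices.
Arguments Lam {R}.
Arguments LamInv {R}.
Arguments zone {R}.

(* Main.v *)
Require Import Defs.
From HB Require Import structures.
From mathcomp Require Import all_boot all_order all_algebra.
From mathcomp Require Import zify ring.
From Stdlib Require Import ClassicalEpsilon FunctionalExtensionality.
Set Implicit Arguments.
Unset Strict Implicit.
Unset Printing Implicit Defensive.
Import Order.TTheory GRing.Theory Num.Theory.
Local Open Scope ring_scope.



Section Lim.
Variable R : numFieldType.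
Implicit Types (u v : nat -> R) (l : R).

Lemma cvg_uniq u l1 l2 : cvg u l1 -> cvg u l2 -> l1 = l2.
Proof.
move=> h1 h2; apply/eqP; apply/negPn/negP => ne.
have e0 : 0 < `|l1 - l2| / 2 by rewrite divr_gt0 // normr_gt0 subr_eq0.
have [N1 HN1] := h1 _ e0; have [N2 HN2] := h2 _ e0.
have := HN1 (maxn N1 N2) (leq_maxl _ _); have := HN2 (maxn N1 N2) (leq_maxr _ _).
set x := u _ => a2 a1.
have h := ler_distD x l1 l2; rewrite (distrC l1 x) in h.
have := lt_le_trans (ltrD a1 a2) (lexx _).
rewrite -splitr => h'.
by have := lt_le_trans h' h; rewrite ltxx.
Qed.

Lemma lim_cvg u l : cvg u l -> lim u = l.
Proof.
move=> h; rewrite /lim; have := epsilon_spec (inhabits 0) (cvg u) (ex_intro _ l h).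
by move=> h'; apply: cvg_uniq h' h.
Qed.

Lemma cvg_ev u l N0 : (forall n, (N0 <= n)%N -> u n = l) -> cvg u l.
Proof.
move=> h e e0; exists N0 => n hn; by rewrite h // subrr normr0.
Qed.

Lemma cvg_ext u v l N0 : (forall n, (N0 <= n)%N -> u n = v n) -> cvg v l -> cvg u l.
Proof.
move=> h hv e e0; have [N HN] := hv e e0; exists (maxn N0 N) => n hn.
rewrite h; last by apply: leq_trans hn; apply: leq_maxl.
by apply: HN; apply: leq_trans hn; apply: leq_maxr.
Qed.

Lemma cvg_shift u l m : cvg u l -> cvg (fun N => u (N - m)%N) l.
Proof.
move=> h e e0; have [N HN] := h e e0; exists (N + m)%N => n hn.
apply: HN; lia.
Qed.

Lemma cvg_scale u l c : cvg u l -> cvg (fun N => c * u N) (c * l).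
Proof.
move=> h e e0.
have c1 : 0 < `|c| + 1 by rewrite ltr_wpDl.
have [N HN] := h (e / (`|c| + 1)) (divr_gt0 e0 c1); exists N => n hn.
rewrite -mulrBr normrM.
have := HN n hn => hh.
apply: (le_lt_trans (y := (`|c| + 1) * `|u n - l|)).
  by rewrite ler_wpM2r // lerDl.
by rewrite mulrC -ltr_pdivlMr.
Qed.

End Lim.

Section Geo.
Variable R : archiNumFieldType.

Lemma bern (t : R) n : 0 <= t -> n%:R * t <= (1 + t) ^+ n - 1.
Proof.
move=> t0; elim: n => [|n IH]; first by rewrite mul0r expr0 subrr.
have e : (1 + t) ^+ n.+1 - 1 = (1 + t) * ((1 + t) ^+ n - 1) + t.
  by rewrite exprS; ring.
have h0 : 0 <= (1 + t) ^+ n - 1 by apply: le_trans (IH); rewrite mulr_ge0.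
rewrite e -natr1 mulrDl mul1r lerD2r; apply: le_trans IH _.
by rewrite ler_peMl // lerDl.
Qed.

End Geo.

Section Geo2.
Variable R : archiNumFieldType.

Lemma geo_small (r K e : R) : 0 <= r -> r < 1 -> 0 < e -> 0 <= K ->
  exists N, forall n, (N <= n)%N -> K * r ^+ n < e.
Proof.
move=> r0 r1 e0 K0.
have [->|rn0] := eqVneq r 0.
  by exists 1%N => n hn; rewrite expr0n; case: n hn => // n _; rewrite /= mulr0.
have rp : 0 < r by rewrite lt_def rn0 r0.
set t := r^-1 - 1.
have ht : 0 < t by rewrite subr_gt0 invf_gt1.
have et : 0 < e * t by rewrite mulr_gt0.
have hx : 0 <= K / (e * t) by rewrite divr_ge0 // ltW.
exists (Num.Def.archi_bound (K / (e * t))) => n hn.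
have hb := archi_boundP hx.
have hn' : K / (e * t) < n%:R.
  apply: lt_le_trans hb _; by rewrite ler_nat.
have H1 : K < e * (r^-1) ^+ n.
  have : K < n%:R * (e * t) by rewrite -ltr_pdivrMr.
  move/lt_le_trans; apply.
  rewrite mulrCA ler_pM2l // -[r^-1](subrK 1) addrC.
  by apply: le_trans (bern _ (ltW ht)) _; rewrite gerBl.
have rn : 0 < r ^+ n by rewrite exprn_gt0.
have := H1; rewrite -(ltr_pM2r rn) -mulrA -exprMn mulVf // expr1n mulr1.
by [].
Qed.
End Geo2.

Section Bnd.
Variable R : archiNumFieldType.

Lemma cvg_bound (u : nat -> R) l (r K : R) : 0 <= r -> r < 1 -> 0 <= K ->
  (forall n, `|u n - l| <= K * r ^+ n) -> cvg u l.
Proof.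
move=> r0 r1 K0 h e e0; have [N HN] := geo_small r0 r1 e0 K0.
by exists N => n hn; apply: le_lt_trans (h n) (HN n hn).
Qed.

Lemma prod_bound (y : nat -> R) n (B : R) : 0 <= B -> B <= 1 ->
  (forall k, (k < n)%N -> `|y k| <= B) ->
  `|\prod_(k < n) (1 - y k) - 1| <= 3 ^+ n * B.
Proof.
move=> B0 B1; elim: n => [|n IH] hy0; first by rewrite big_ord0 subrr normr0 mulr_ge0.
have hy : `|y n| <= B by apply: hy0.
have := IH (fun k hk => hy0 k (ltnW hk)) => {}IH.
rewrite big_ord_recr /=.
set P := \prod_(_ < _) _.
have e : P * (1 - y n) - 1 = (P - 1) * (1 - y n) - y n by ring.
rewrite e; apply: le_trans (ler_normB _ _) _.
rewrite normrM.
have h1 : `|1 - y n| <= 2.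
  apply: le_trans (ler_normB _ _) _; rewrite normr1.
  by rewrite -[2]/(1 + 1) lerD2l (le_trans hy).
have h2 : `|P - 1| * `|1 - y n| <= 3 ^+ n * B * 2.
  by apply: ler_pM => //; rewrite mulr_ge0 // exprn_ge0.
apply: le_trans (lerD h2 hy) _.
rewrite exprS.
have h3 : B <= 3 ^+ n * B by rewrite ler_peMl // exprn_ege1 // ler1n.
have -> : 3 * 3 ^+ n * B = 3 ^+ n * B * 2 + 3 ^+ n * B by ring.
by rewrite lerD2l.
Qed.
End Bnd.


Section ZS.
Variable R : numFieldType.

Lemma zsum_win (f : int -> R) (a : int) (n : nat) :
  (forall k, f k != 0 -> (a <= k) && (k < a + n%:Z)) ->
  zsum f = \sum_(t < n) f (a + t%:Z).
Proof.
move=> hf; rewrite /zsum; apply: lim_cvg.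
apply: (cvg_ev (N0 := (absz a + n)%N)) => M hM.
have ha1 : a <= (absz a)%:Z by rewrite abszE ler_norm.
have ha2 : - a <= (absz a)%:Z by rewrite abszE -normrN ler_norm.
rewrite -addnn.
set p := absz (a + M%:Z).
have hp : p%:Z = a + M%:Z by rewrite /p gez0_abs; lia.
have hz : forall k, ~~ ((a <= k) && (k < a + n%:Z)) -> f k = 0.
  by move=> k hk; apply/eqP; apply/negPn/negP => /hf; apply/negP.
rewrite -(big_mkord xpredT (fun k => f (k%:Z - M%:Z))).
clearbody p.
rewrite (big_cat_nat (n := p)) /=; [|lia|lia].
rewrite [X in _ + X](big_cat_nat (n := (p + n)%N)) /=; [|lia|lia].
rewrite big1_seq ?add0r; last first.
  move=> k /andP [_]; rewrite mem_index_iota => hk; apply: hz.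
  by apply/negP => /andP [h1 h2]; lia.
rewrite [X in _ + X]big1_seq ?addr0; last first.
  move=> k /andP [_]; rewrite mem_index_iota => hk; apply: hz.
  by apply/negP => /andP [h1 h2]; lia.
rewrite -{1}[p]add0n big_addn addnC addnK big_mkord.
by apply: eq_bigr => i _; congr f; lia.
Qed.

Lemma zsum_pt (f : int -> R) (a : int) :
  (forall k, k != a -> f k = 0) -> zsum f = f a.
Proof.
move=> h; rewrite (@zsum_win _ a 1) ?big_ord1 ?addr0 //.
move=> k; have [->|ne] := eqVneq k a; first by rewrite lexx /= ltrDl.
by rewrite h ?eqxx.
Qed.
End ZS.


Section Mat.
Variable R : numFieldType.
Implicit Types (A B C : zmat R).

Lemma zmat_ext A B : (forall i j, A i j = B i j) -> A = B.
Proof. by move=> h; apply: functional_extensionality => i; apply: functional_extensionality. Qed.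

Lemma zmul_win A B i j (a : int) (n : nat) : lower A -> lower B ->
  a <= j -> i < a + n%:Z ->
  zmul A B i j = \sum_(t < n) A i (a + t%:Z) * B (a + t%:Z) j.
Proof.
move=> hA hB h1 h2; rewrite /zmul; apply: zsum_win => k.
have [hk|hk] := leP k i; last by rewrite hA ?mul0r ?eqxx.
have [hk'|hk'] := leP j k; last by rewrite hB ?mulr0 ?eqxx.
move=> _; apply/andP; split; lia.
Qed.

Lemma lower_mul A B : lower A -> lower B -> lower (zmul A B).
Proof.
move=> hA hB i j hij; rewrite (@zmul_win _ _ _ _ j 0) //; first by rewrite big_ord0.
by rewrite addr0.
Qed.

Lemma zmulA_low A B C : lower A -> lower B -> lower C ->
  zmul (zmul A B) C = zmul A (zmul B C).
Proof.
move=> hA hB hC; apply: zmat_ext => i j.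
have [hij|hij] := ltP i j.
  by rewrite (lower_mul (lower_mul hA hB) hC) // (lower_mul hA (lower_mul hB hC)).
pose n := absz (i - j + 1).
have hn : i < j + n%:Z by rewrite /n gez0_abs; lia.
rewrite (@zmul_win _ _ _ _ j n) //; last by apply: lower_mul.
rewrite (@zmul_win _ _ _ _ j n) //; last by apply: lower_mul.
rewrite (eq_bigr (fun l : 'I_n => \sum_(t < n) A i (j + t%:Z) * B (j + t%:Z) (j + l%:Z) * C (j + l%:Z) j)); last first.
  move=> l _; rewrite (@zmul_win _ _ _ _ j n) // ?big_distrl //; lia.
rewrite [RHS](eq_bigr (fun k : 'I_n => \sum_(t < n) A i (j + k%:Z) * (B (j + k%:Z) (j + t%:Z) * C (j + t%:Z) j))); last first.
  move=> k _; have hk := ltn_ord k; rewrite (@zmul_win _ _ _ _ j n) // ?big_distrr //; lia.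
rewrite exchange_big /=; apply: eq_bigr => k _; apply: eq_bigr => l _.
by rewrite mulrA.
Qed.

Lemma zmul_diag_l (d : int -> R) A : zmul (zdiag d) A = fun i j => d i * A i j.
Proof.
apply: zmat_ext => i j; rewrite /zmul (@zsum_pt _ _ i) /zdiag ?eqxx //.
by move=> k; rewrite eq_sym => /negbTE ->; rewrite mul0r.
Qed.

Lemma zmul_diag_r (d : int -> R) A : zmul A (zdiag d) = fun i j => A i j * d j.
Proof.
apply: zmat_ext => i j; rewrite /zmul (@zsum_pt _ _ j) /zdiag ?eqxx //.
by move=> k /negbTE ->; rewrite mulr0.
Qed.

Lemma zone_diag : zone = zdiag (fun _ => 1 : R).
Proof. by apply: zmat_ext => i j; rewrite /zone /zdiag; case: eqP. Qed.

Lemma zmul_1l A : zmul zone A = A.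
Proof. by rewrite zone_diag zmul_diag_l; apply: zmat_ext => i j; rewrite mul1r. Qed.

Lemma zmul_1r A : zmul A zone = A.
Proof. by rewrite zone_diag zmul_diag_r; apply: zmat_ext => i j; rewrite mulr1. Qed.

Lemma lower_one : lower (zone : zmat R).
Proof. by move=> i j h; rewrite /zone; case: eqP => // e; move: h; rewrite e ltxx. Qed.

Lemma zinv_eq A B : lower A -> lower B -> zmul A B = zone -> zmul B A = zone ->
  zinv A = B.
Proof.
move=> hA hB h1 h2; rewrite /zinv.
have ex : exists B, lower B /\ zmul A B = zone /\ zmul B A = zone by exists B.
have [hB' [h1' h2']] := epsilon_spec (inhabits zone) _ ex.
set B' := epsilon _ _ in hB' h1' h2' *.
by rewrite -[B']zmul_1r -h1 -zmulA_low // h2' zmul_1l.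
Qed.

Lemma zmul_Lam_r A : zmul A Lam = fun i j => A i (j - 1).
Proof.
apply: zmat_ext => i j; rewrite /zmul (@zsum_pt _ _ (j - 1)) /Lam.
  by rewrite subrK eqxx mulr1.
move=> k hk; have -> : (j == k + 1) = false by apply/negbTE; apply: contra hk => /eqP ->; rewrite addrK.
by rewrite mulr0.
Qed.

Lemma zmul_Lam_l A : zmul Lam A = fun i j => A (i + 1) j.
Proof.
apply: zmat_ext => i j; rewrite /zmul (@zsum_pt _ _ (i + 1)) /Lam ?eqxx ?mul1r //.
by move=> k /negbTE ->; rewrite mul0r.
Qed.

Definition conv (a b : nat -> R) (n : nat) : R := \sum_(k < n.+1) a (n - k)%N * b k.

Definition Kmat (e f : int -> R) (c : nat -> R) : zmat R :=
  fun i j => if j <= i then e i * f j * c (absz (i - j)) else 0.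

Lemma lower_K e f c : lower (Kmat e f c).
Proof. by move=> i j h; rewrite /Kmat leNgt h. Qed.

Lemma Kmul e f e' f' a b : (forall k, f k * e' k = 1) ->
  zmul (Kmat e f a) (Kmat e' f' b) = Kmat e f' (conv a b).
Proof.
move=> hfe; apply: zmat_ext => i j.
have [hij|hij] := ltP i j.
  by rewrite (lower_mul (lower_K e f a) (lower_K e' f' b) hij) /Kmat leNgt hij.
pose m := absz (i - j).
have hm : i - j = m%:Z by rewrite /m gez0_abs; lia.
rewrite (@zmul_win _ _ _ _ j m.+1 (lower_K _ _ _) (lower_K _ _ _)) //; last by lia.
have -> : Kmat e f' (conv a b) i j = e i * f' j * conv a b m by rewrite /Kmat; case: ifP => // h; exfalso; move: h; lia.
rewrite /Kmat /conv big_distrr /=; apply: eq_bigr => t _.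
have ht := ltn_ord t.
have -> : (j + t%:Z <= i) = true by apply/idP; lia.
have -> : (j <= j + t%:Z) = true by apply/idP; lia.
have -> : absz ((i - (j + t%:Z))%R) = (m - t)%N by lia.
have -> : absz ((j + t%:Z - j)%R) = t by lia.
have := hfe (j + t%:Z) => h.
transitivity (e i * f' j * (f (j + t%:Z) * e' (j + t%:Z)) * (a (m - t)%N * b t)); first by ring.
by rewrite h mulr1.
Qed.

Definition delta (m : nat) : nat -> R := fun n => (n == m)%:R.

Lemma zone_K e f : (forall k, e k * f k = 1) -> zone = Kmat e f (delta 0).
Proof.
move=> h; apply: zmat_ext => i j; rewrite /zone /Kmat /delta.
have [->|ne] := eqVneq i j; first by rewrite lexx subrr /= h mulr1.
case: ifP => // hji.
have -> : (absz ((i - j)%R) == 0%N) = false by apply/negbTE; lia.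
by rewrite mulr0.
Qed.

Lemma LamInv_K : LamInv = Kmat (fun _ => 1) (fun _ => 1) (delta 1) :> zmat R.
Proof.
apply: zmat_ext => i j; rewrite /LamInv /Kmat /delta !mul1r.
case: ifP => hji.
  by congr (_%:R); apply/eqP; case: eqP; lia.
by have -> : (i == j + 1) = false by apply/negbTE; lia.
Qed.

Lemma diag_K_l (d : int -> R) e f c : zmul (zdiag d) (Kmat e f c) = Kmat (fun i => d i * e i) f c.
Proof.
rewrite zmul_diag_l; apply: zmat_ext => i j; rewrite /Kmat; case: ifP => _; [ring|by rewrite mulr0].
Qed.

Lemma diag_K_r (d : int -> R) e f c : zmul (Kmat e f c) (zdiag d) = Kmat e (fun j => f j * d j) c.
Proof.
rewrite zmul_diag_r; apply: zmat_ext => i j; rewrite /Kmat; case: ifP => _; [ring|by rewrite mul0r].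
Qed.

End Mat.


Section Conv.
Variable R : numFieldType.
Implicit Types (a b c u v : nat -> R).

Definition Pn (n : nat) (x : nat -> R) : {poly R} := \poly_(i < n.+1) x i.

Lemma convP n a b k : (k <= n)%N -> conv a b k = (Pn n a * Pn n b)`_k.
Proof.
move=> hk; rewrite coefMr /conv; apply: eq_bigr => j _.
have hj := ltn_ord j.
rewrite !coef_poly.
have -> : (k - j < n.+1)%N by lia.
by have -> : (j < n.+1)%N by lia.
Qed.

Lemma Pn_coef n x k : (k <= n)%N -> (Pn n x)`_k = x k.
Proof. by move=> hk; rewrite coef_poly ltnS hk. Qed.

Lemma mul_eqn n (p p' r r' : {poly R}) :
  (forall k, (k <= n)%N -> p`_k = p'`_k) -> (forall k, (k <= n)%N -> r`_k = r'`_k) ->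
  forall k, (k <= n)%N -> (p * r)`_k = (p' * r')`_k.
Proof.
move=> hp hr k hk; rewrite !coefM; apply: eq_bigr => j _; have hj := ltn_ord j.
by rewrite hp ?hr //; lia.
Qed.

Lemma conv_eqn n a b : forall k, (k <= n)%N -> (Pn n (conv a b))`_k = (Pn n a * Pn n b)`_k.
Proof. by move=> k hk; rewrite Pn_coef // (convP _ _ hk). Qed.

Lemma conv_comm a b : conv a b = conv b a.
Proof.
apply: functional_extensionality => n.
by rewrite (convP _ _ (leqnn n)) (convP _ _ (leqnn n)) mulrC.
Qed.

Lemma conv_assoc a b c : conv (conv a b) c = conv a (conv b c).
Proof.
apply: functional_extensionality => n.
rewrite (convP _ _ (leqnn n)) (convP _ _ (leqnn n)).
rewrite (mul_eqn (p' := Pn n a * Pn n b) (r' := Pn n c) (@conv_eqn n a b)) //.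
rewrite (mul_eqn (p' := Pn n a) (r' := Pn n b * Pn n c) _ (@conv_eqn n b c)) //.
by rewrite mulrA.
Qed.

Lemma conv_AC a b c : conv a (conv b c) = conv b (conv a c).
Proof. by rewrite -conv_assoc (conv_comm a b) conv_assoc. Qed.

Lemma conv_delta0 a : conv (delta R 0) a = a.
Proof.
apply: functional_extensionality => n; rewrite /conv big_ord_recr /= subnn.
rewrite big1 ?add0r /delta ?eqxx ?mul1r // => i _.
have hi := ltn_ord i; have -> : (n - i == 0)%N = false by apply/negbTE; lia.
by rewrite mul0r.
Qed.

Lemma conv_delta0r a : conv a (delta R 0) = a.
Proof. by rewrite conv_comm conv_delta0. Qed.

Definition d1 (cc : R) : nat -> R := fun n => if n == 0%N then 1 else if n == 1%N then cc else 0.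

Lemma conv_d1 cc u n : conv (d1 cc) u n = if n is n'.+1 then u n + cc * u n' else u 0%N.
Proof.
case: n => [|n]; first by rewrite /conv big_ord1 /d1 /= mul1r.
rewrite /conv big_ord_recr big_ord_recr /= subnn /d1 /=.
rewrite big1 ?add0r.
  by rewrite subSnn /= mul1r addrC.
move=> i _; have hi := ltn_ord i.
have -> : (n.+1 - i == 0)%N = false by apply/negbTE; lia.
have -> : (n.+1 - i == 1)%N = false by apply/negbTE; lia.
by rewrite mul0r.
Qed.

Definition geo (cc : R) : nat -> R := fun n => cc ^+ n.

Lemma conv_d1_geo cc : conv (d1 cc) (geo (- cc)) = delta R 0.
Proof.
apply: functional_extensionality => n; rewrite conv_d1 /geo /delta.
case: n => [|n]; first by rewrite expr0.
by rewrite exprS mulNr addrC subrr.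
Qed.

Variable q : R.
Definition twist u : nat -> R := fun n => q ^+ n * u n.

Lemma twist_conv a b : twist (conv a b) = conv (twist a) (twist b).
Proof.
apply: functional_extensionality => n; rewrite /twist /conv big_distrr.
apply: eq_bigr => i _; have hi := ltn_ord i.
have e : q ^+ n = q ^+ (n - i) * q ^+ i by rewrite -exprD subnK // -ltnS.
by rewrite e /= mulrACA.
Qed.

End Conv.


Section QS.
Variable R : numFieldType.
Variables (q s : R).
Hypothesis hs : s ^+ 2 = q.
Hypothesis hq1 : `|q| < 1.

Lemma qk_neq1 k : (0 < k)%N -> q ^+ k != 1.
Proof.
move=> hk; apply/eqP => e.
have : `|q ^+ k| < 1 by rewrite normrX exprn_ilt1 // -lt0n.
by rewrite e normr1 ltxx.
Qed.

Lemma one_sub_neq0 k : 1 - q ^+ k.+1 != 0.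
Proof. by rewrite subr_eq0 eq_sym qk_neq1. Qed.

Definition qp n : R := \prod_(k < n) (1 - q ^+ k.+1).

Lemma qp_neq0 n : qp n != 0.
Proof.
elim: n => [|n IH]; first by rewrite /qp big_ord0 oner_neq0.
by rewrite /qp big_ord_recr /= mulf_neq0 // one_sub_neq0.
Qed.

Lemma qpS n : qp n.+1 = qp n * (1 - q ^+ n.+1).
Proof. by rewrite /qp big_ord_recr. Qed.

Definition Hf (b : R) : nat -> R := fun n => (b * s) ^+ n / qp n.
Definition Ef (a : R) : nat -> R := fun n => a ^+ n * s ^+ (n * n) / qp n.

Lemma T1 b : twist q (Hf b) = conv (d1 (- (b * s))) (Hf b).
Proof.
apply: functional_extensionality => n; rewrite conv_d1 /twist.
case: n => [|n]; first by rewrite expr0 mul1r.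
rewrite /Hf qpS [(b * s) ^+ n.+1]exprS.
have h1 := qp_neq0 n; have h2 := one_sub_neq0 n.
move: h1 h2; set Q0 := qp n; set y := q ^+ n.+1; set x := (b * s) ^+ n => h1 h2.
by field; rewrite h1 h2.
Qed.

Lemma sq_exp n : s ^+ (n.+1 * n.+1) = s ^+ (n * n) * q ^+ n * s.
Proof.
have -> : (n.+1 * n.+1 = n * n + 2 * n + 1)%N by lia.
rewrite !exprD expr0 expr1 mulr1 -hs -exprM mul2n -addnn exprD; ring.
Qed.

Lemma T2 a : Ef a = conv (d1 (a * s)) (twist q (Ef a)).
Proof.
apply: functional_extensionality => n; rewrite conv_d1 /twist.
case: n => [|n]; first by rewrite expr0 mul1r.
rewrite /Ef qpS sq_exp [q ^+ n.+1]exprS [a ^+ n.+1]exprS.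
have h1 := qp_neq0 n; have h2 := one_sub_neq0 n.
rewrite [q ^+ n.+1]exprS in h2.
move: h1 h2; set Q0 := qp n; set y := q ^+ n; set x := a ^+ n; set z := s ^+ (n * n) => h1 h2.
by field; rewrite h1 h2.
Qed.

Lemma S5 a : conv (Hf (- a)) (Ef a) = delta R 0.
Proof.
set p := conv _ _.
have tp : twist q p = p.
  rewrite /p twist_conv T1 mulNr opprK (conv_comm (d1 _)) conv_assoc.
  by rewrite -T2.
apply: functional_extensionality => n.
case: n => [|n].
  by rewrite /p /conv big_ord1 /Hf /Ef /qp /delta big_ord0 /= subnn !expr0 !divr1 !mul1r.
have := congr1 (fun f => f n.+1) tp; rewrite /twist /delta /= => e.
have : p n.+1 * (1 - q ^+ n.+1) = 0 by rewrite mulrBr mulr1 mulrC e subrr.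
move/eqP; rewrite mulf_eq0 (negbTE (one_sub_neq0 n)) orbF => /eqP ->.
by [].
Qed.

Lemma S5' b : conv (Hf b) (Ef (- b)) = delta R 0.
Proof. by rewrite -{1}[b]opprK S5. Qed.

Lemma S5r a : conv (Ef a) (Hf (- a)) = delta R 0.
Proof. by rewrite conv_comm S5. Qed.

Variable Q : R.
Definition wseq := conv (Hf (- Q)) (Ef (-1)).
Definition vseq := conv (Ef Q) (Hf 1).

Lemma wv : conv wseq vseq = delta R 0.
Proof.
rewrite /wseq /vseq conv_assoc (conv_AC (Ef (-1))) -conv_assoc S5 conv_delta0.
by have := S5r (-1); rewrite opprK.
Qed.

Lemma vw : conv vseq wseq = delta R 0.
Proof. by rewrite conv_comm wv. Qed.

Lemma wtv : conv wseq (twist q vseq) = conv (d1 (- s)) (geo (- (Q * s))).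
Proof.
rewrite /wseq /vseq twist_conv.
rewrite conv_assoc (conv_AC (Ef (-1))).
have -> : conv (Ef (-1)) (twist q (Hf 1)) = d1 (- s).
  rewrite T1 conv_AC.
  by have := S5r (-1); rewrite opprK => ->; rewrite conv_delta0r mul1r.
rewrite -conv_assoc. set y := conv (Hf (- Q)) (twist q (Ef Q)).
have hy : conv (d1 (Q * s)) y = delta R 0.
  by rewrite /y conv_AC -T2 S5.
have -> : y = geo (- (Q * s)).
  rewrite -[y]conv_delta0 -(conv_d1_geo (Q * s)) (conv_comm (d1 _)) conv_assoc hy.
  by rewrite conv_delta0r.
by rewrite conv_comm.
Qed.

End QS.


Section KG.
Variable R : numFieldType.

Definition sdelta (x : R) (n : nat) : nat -> R := fun m => (m == n)%:R * x.

Lemma zscale_K (c : R) e f a : zscale c (Kmat e f a) = Kmat e f (fun n => c * a n).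
Proof. apply: zmat_ext => i j; rewrite /zscale /Kmat; case: ifP => _; [ring|by rewrite mulr0]. Qed.

Lemma zadd_K e f a b : zadd (Kmat e f a) (Kmat e f b) = Kmat e f (fun n => a n + b n) :> zmat R.
Proof. apply: zmat_ext => i j; rewrite /zadd /Kmat; case: ifP => _; [ring|by rewrite addr0]. Qed.

Lemma K_ext e f a b : (forall n, a n = b n) -> Kmat e f a = Kmat e f b :> zmat R.
Proof. by move=> h; rewrite (functional_extensionality _ _ h). Qed.

Lemma conv_sdelta1 x y n : conv (sdelta x n) (sdelta y 1) = sdelta (x * y) n.+1.
Proof.
apply: functional_extensionality => m; rewrite /conv /sdelta.
case: m => [|m].
  by rewrite big_ord1 /= !mul0r mulr0.
rewrite big_ord_recl big_ord_recl /=.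
rewrite big1 ?addr0.
  rewrite !mul0r mulr0 add0r mul1r subn1 /= eqSS; ring.
by move=> i _; rewrite mul0r mulr0.
Qed.

Lemma zpow_K e f (c : R) n : (forall k, f k * e k = 1) ->
  zpow (Kmat e f (sdelta c 1)) n = Kmat e f (sdelta (c ^+ n) n).
Proof.
move=> hfe; elim: n => [|n IH] /=.
  rewrite (@zone_K _ e f); last by move=> k; rewrite mulrC.
  by apply: K_ext => m; rewrite /sdelta /delta expr0 mulr1.
by rewrite IH Kmul // conv_sdelta1 exprS mulrC.
Qed.

Lemma sum_sdelta (N m : nat) (x : nat -> R) : (m < N)%N ->
  \sum_(n < N) sdelta (x n) n m = x m.
Proof.
move=> hm; rewrite (bigD1 (Ordinal hm)) //= big1 ?addr0 /sdelta ?eqxx ?mul1r //.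
move=> i /eqP hi; have -> : (m == i) = false.
  by apply/negbTE; apply/eqP => e; apply: hi; apply: val_inj.
by rewrite mul0r.
Qed.

Lemma zseries_K e f (x : nat -> R) :
  zseries (fun n => Kmat e f (sdelta (x n) n)) = Kmat e f x.
Proof.
apply: zmat_ext => i j; rewrite /zseries /zlim /=; apply: lim_cvg.
rewrite /Kmat; case: ifP => hji.
  apply: (cvg_ev (N0 := (absz (i - j)).+1)) => N hN.
  by rewrite -big_distrr /= sum_sdelta.
by apply: (cvg_ev (N0 := 0)) => N _; rewrite big1.
Qed.

Lemma zlim_K e f (a : nat -> nat -> R) (b : nat -> R) :
  (forall n, cvg (fun N => a N n) (b n)) ->
  zlim (fun N => Kmat e f (a N)) = Kmat e f b.
Proof.
move=> h; apply: zmat_ext => i j; rewrite /zlim /Kmat; apply: lim_cvg.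
case: ifP => _; first by apply: cvg_scale.
by apply: (cvg_ev (N0 := 0)).
Qed.

Lemma zprodN_K (F : nat -> zmat R) (a : nat -> nat -> R) :
  (forall N, F N.+1 = Kmat (fun _ => 1) (fun _ => 1) (a N)) ->
  forall N, zprodN F N = Kmat (fun _ => 1) (fun _ => 1)
     (nat_rect _ (delta R 0) (fun N u => conv u (a N)) N).
Proof.
move=> hF; elim => [|N IH] /=.
  by rewrite (@zone_K _ (fun _ => 1) (fun _ => 1)) // => k; rewrite mulr1.
by rewrite IH hF Kmul // => k; rewrite mulr1.
Qed.

End KG.


Section Gam.
Variable R : archiNumFieldType.
Variables (q s Q : R).
Hypothesis hs : s ^+ 2 = q.
Hypothesis hq1 : `|q| < 1.

Notation one := (fun _ : int => 1 : R).

Lemma zpow_LamInv n : zpow (LamInv : zmat R) n = Kmat one one (sdelta 1 n).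
Proof.
rewrite LamInv_K (@K_ext _ _ _ (delta R 1) (sdelta 1 1)); last first.
  by move=> m; rewrite /delta /sdelta mulr1.
by rewrite zpow_K ?expr1n // => k; rewrite mulr1.
Qed.

Lemma s_odd N : s ^+ (N.+1.*2).-1 = s * q ^+ N.
Proof. by rewrite doubleS /= exprS -hs -exprM -mul2n. Qed.

Lemma factor_minus N :
  zseries (fun n => zscale ((1 * s ^+ (N.+1.*2).-1) ^+ n) (zpow LamInv n))
  = Kmat one one (geo (s * q ^+ N)).
Proof.
rewrite -(zseries_K one one (geo (s * q ^+ N))); congr zseries.
apply: functional_extensionality => n.
rewrite zpow_LamInv zscale_K s_odd mul1r; apply: K_ext => m.
by rewrite /sdelta /geo; ring.
Qed.

Lemma factor_plus N :
  zadd zone (zscale (Q * s ^+ (N.+1.*2).-1) LamInv)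
  = Kmat one one (d1 (Q * (s * q ^+ N))) :> zmat R.
Proof.
rewrite LamInv_K zscale_K (@zone_K _ one one) ?mulr1 // zadd_K s_odd.
apply: K_ext => n; rewrite /delta /d1; case: n => [|[|n]] //=; ring.
Qed.

Lemma conv_geo (u : nat -> R) (x : R) n : conv u (geo x) n.+1 = u n.+1 + x * conv u (geo x) n.
Proof.
rewrite /conv big_ord_recl /= subn0 /geo expr0 mulr1; congr (_ + _).
rewrite big_distrr /=; apply: eq_bigr => i _; rewrite subSS exprS /=; ring.
Qed.

Fixpoint HN (N : nat) : nat -> R :=
  if N is N'.+1 then conv (HN N') (geo (s * q ^+ N')) else delta R 0.

Definition cN (N n : nat) : R := \prod_(k < n) (1 - q ^+ (N + k)).

Lemma HN_closed N n : HN N n = s ^+ n * cN N n / qp q n.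
Proof.
elim: N n => [|N IH] n /=.
  case: n => [|n]; first by rewrite /delta /cN /qp !big_ord0 expr0 mulr1 divr1.
  by rewrite /delta /cN big_ord_recl /= addn0 expr0 subrr mul0r mulr0 mul0r.
elim: n => [|n IHn].
  by rewrite /conv big_ord1 /geo expr0 mulr1 IH /cN /qp !big_ord0 expr0 !mulr1 invr1.
rewrite conv_geo IHn IH.
have e1 : cN N.+1 n.+1 = cN N.+1 n * (1 - q ^+ N * q ^+ n.+1).
  by rewrite /cN big_ord_recr /= -exprD addSnnS.
have e2 : cN N n.+1 = (1 - q ^+ N) * cN N.+1 n.
  rewrite /cN big_ord_recl /= addn0; congr (_ * _); apply: eq_bigr => i _.
  by rewrite addnS addSn.
rewrite e1 e2 qpS exprS.
have h1 := qp_neq0 hq1 n; have h2 := one_sub_neq0 hq1 n.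
move: h1 h2; set P := qp q n; set C := cN N.+1 n; set y := q ^+ n.+1 => h1 h2.
by field; rewrite h1 h2.
Qed.

Lemma cN_cvg n : cvg (fun N => cN N n) 1.
Proof.
apply: (@cvg_bound _ _ _ `|q| (3 ^+ n)) => //; first by rewrite exprn_ge0.
move=> N; rewrite /cN; apply: (prod_bound (y := fun k => q ^+ (N + k))); first by rewrite exprn_ge0.
  by rewrite exprn_ile1 // ltW.
move=> k _; rewrite normrX exprD ler_piMr ?exprn_ge0 // exprn_ile1 // ltW //.
Qed.

Lemma HN_cvg n : cvg (fun N => HN N n) (Hf q s 1 n).
Proof.
have -> : Hf q s 1 n = (s ^+ n / qp q n) * 1 by rewrite /Hf mul1r mulr1.
apply: (@cvg_ext _ _ (fun N => (s ^+ n / qp q n) * cN N n) _ 0).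
  by move=> N _; rewrite HN_closed; ring.
by apply: cvg_scale; apply: cN_cvg.
Qed.

Lemma Gamma_K : Gamma_minus s 1 = Kmat one one (Hf q s 1).
Proof.
rewrite /Gamma_minus /zinfprod.
rewrite (_ : zprodN _ = fun N => Kmat one one (HN N)); last first.
  apply: functional_extensionality => N.
  rewrite (@zprodN_K _ _ (fun N => geo (s * q ^+ N))); last by move=> M; apply: factor_minus.
  by congr Kmat; elim: N => [|N IH] //=; rewrite IH.
by apply: zlim_K => n; apply: HN_cvg.
Qed.

Fixpoint EN (N : nat) : nat -> R :=
  if N is N'.+1 then conv (EN N') (d1 (Q * (s * q ^+ N'))) else delta R 0.

Definition dN (N n : nat) : R := \prod_(k < n) (1 - q ^+ (N - k)).

Lemma dN0 N n : (N < n)%N -> dN N n = 0.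
Proof.
move=> hN; rewrite /dN (bigD1 (Ordinal hN)) //= subnn expr0 subrr mul0r //.
Qed.

Lemma EN_closed N n : EN N n = Q ^+ n * s ^+ (n * n) * dN N n / qp q n.
Proof.
elim: N n => [|N IH] n /=.
  case: n => [|n]; first by rewrite /delta /dN /qp !big_ord0 !expr0 !mulr1 divr1.
  by rewrite /delta dN0 // mulr0 mul0r.
rewrite conv_comm conv_d1.
case: n => [|n]; first by rewrite IH /dN !big_ord0.
rewrite !IH.
have e1 : dN N.+1 n.+1 = (1 - q ^+ N.+1) * dN N n.
  rewrite /dN big_ord_recl /= subn0; congr (_ * _); by apply: eq_bigr => i _.
have e2 : dN N n.+1 = dN N n * (1 - q ^+ (N - n)).
  by rewrite /dN big_ord_recr.
rewrite e1 e2 qpS (sq_exp hs hq1) [Q ^+ n.+1]exprS.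
have h1 := qp_neq0 hq1 n; have h2 := one_sub_neq0 hq1 n.
have [hn|hn] := leqP n N; last first.
  by rewrite dN0 //; ring.
have e3 : q ^+ N = q ^+ (N - n) * q ^+ n by rewrite -exprD subnK.
rewrite [q ^+ N.+1]exprS e3 [q ^+ n.+1]exprS.
rewrite [q ^+ n.+1]exprS in h2.
move: h1 h2; set P := qp q n; set D := dN N n; set y := q ^+ n; set z := q ^+ (N - n) => h1 h2.
by field; rewrite h1 h2.
Qed.

Lemma dN_cvg n : cvg (fun N => dN N n) 1.
Proof.
pose u M := \prod_(k < n) (1 - q ^+ ((M + n) - k)).
have hu : cvg u 1.
  apply: (cvg_bound (r := `|q|) (K := 3 ^+ n)) => //; first by rewrite exprn_ge0.
  move=> M; rewrite /u; apply: (prod_bound (y := fun k => q ^+ ((M + n) - k))); first by rewrite exprn_ge0.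
    by rewrite exprn_ile1 // ltW.
  move=> k hk.
  rewrite normrX -addnBA; last by apply: ltnW.
  by rewrite exprD ler_piMr ?exprn_ge0 // exprn_ile1 // ltW //.
apply: (@cvg_ext _ _ (fun N => u (N - n)%N) _ n); last by apply: cvg_shift.
by move=> N hN; rewrite /u /dN subnK.
Qed.

Lemma EN_cvg n : cvg (fun N => EN N n) (Ef q s Q n).
Proof.
have -> : Ef q s Q n = (Q ^+ n * s ^+ (n * n) / qp q n) * 1 by rewrite /Ef mulr1.
apply: (@cvg_ext _ _ (fun N => (Q ^+ n * s ^+ (n * n) / qp q n) * dN N n) _ 0).
  by move=> N _; rewrite EN_closed; ring.
by apply: cvg_scale; apply: dN_cvg.
Qed.

Lemma Gammap_K : Gammap_minus s Q = Kmat one one (Ef q s Q).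
Proof.
rewrite /Gammap_minus /zinfprod.
rewrite (_ : zprodN _ = fun N => Kmat one one (EN N)); last first.
  apply: functional_extensionality => N.
  rewrite (@zprodN_K _ _ (fun N => d1 (Q * (s * q ^+ N)))); last by move=> M; apply: factor_plus.
  by congr Kmat; elim: N => [|N IH] //=; rewrite IH.
by apply: zlim_K => n; apply: EN_cvg.
Qed.

End Gam.


Section Fin.
Variable R : archiNumFieldType.
Variables (q s Q : R).
Hypothesis hs : s ^+ 2 = q.
Hypothesis hq1 : `|q| < 1.
Hypothesis hs0 : s != 0.

Notation one := (fun _ : int => 1 : R).
Definition e0 : int -> R := fun i => s ^ (i * i) * 1.
Definition f0 : int -> R := fun j => 1 * s ^ (- (j * j)).

Lemma sz (a b : int) : a = b -> s ^ a = s ^ b.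
Proof. by move->. Qed.

Lemma szD (a b : int) : s ^ a * s ^ b = s ^ (a + b).
Proof. by rewrite expfzDr. Qed.

Lemma fe k : f0 k * e0 k = 1.
Proof. by rewrite /f0 /e0 mul1r mulr1 szD addNr expr0z. Qed.

Lemma ef k : e0 k * f0 k = 1.
Proof. by rewrite mulrC fe. Qed.

Lemma qz (i : int) : q ^ i = s ^ (2 * i).
Proof. by rewrite -hs -exprz_exp. Qed.

Lemma X1 (j : int) (t : nat) : f0 (j + t%:Z - 1) * e0 (j + t%:Z) = s ^ (2 * j - 1) * q ^+ t.
Proof.
rewrite /f0 /e0 mul1r mulr1 szD -hs -exprM.
have -> : s ^+ (2 * t) = s ^ ((2 * t)%N%:Z) by [].
rewrite szD; apply: sz; rewrite PoszM; ring.
Qed.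

Lemma X2 (i : int) : e0 (i + 1) = e0 i * s ^ (2 * i + 1).
Proof. by rewrite /e0 !mulr1 szD; apply: sz; ring. Qed.

Lemma X4 (j : int) : f0 (j - 1) = f0 j * s ^ (2 * j - 1).
Proof. by rewrite /f0 !mul1r szD; apply: sz; ring. Qed.

Lemma one1 : forall k : int, (fun _ : int => 1 : R) k * (fun _ : int => 1 : R) k = 1.
Proof. by move=> k; rewrite mulr1. Qed.

Lemma Ginv_K : zinv (Gamma_minus s 1) = Kmat one one (Ef q s (-1)).
Proof.
rewrite (Gamma_K hs hq1); apply: zinv_eq; try exact: lower_K.
  by rewrite (Kmul _ _ _ _ one1) (S5' hs hq1) -(zone_K one1).
rewrite (Kmul _ _ _ _ one1); have := S5r hs hq1 (-1); rewrite opprK => ->.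
by rewrite -(zone_K one1).
Qed.

Lemma Gpinv_K : zinv (Gammap_minus s Q) = Kmat one one (Hf q s (- Q)).
Proof.
rewrite (Gammap_K Q hs hq1); apply: zinv_eq; try exact: lower_K.
  by rewrite (Kmul _ _ _ _ one1) (S5r hs hq1) -(zone_K one1).
by rewrite (Kmul _ _ _ _ one1) (S5 hs hq1) -(zone_K one1).
Qed.

Lemma W_K : zmul (zmul (zmul (zdiag (fun i : int => s ^ (i * i))) (zinv (Gammap_minus s Q)))
      (zinv (Gamma_minus s 1))) (zdiag (fun i : int => s ^ (- (i * i))))
  = Kmat e0 f0 (wseq q s Q).
Proof. by rewrite Gpinv_K Ginv_K diag_K_l (Kmul _ _ _ _ one1) diag_K_r. Qed.

Lemma Winv_K : zinv (Kmat e0 f0 (wseq q s Q)) = Kmat e0 f0 (vseq q s Q).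
Proof.
apply: zinv_eq; try exact: lower_K.
  by rewrite (Kmul _ _ _ _ fe) (wv hs hq1) -(zone_K ef).
by rewrite (Kmul _ _ _ _ fe) (vw hs hq1) -(zone_K ef).
Qed.

Lemma Y1_K : zscale (- Q) (zmul (zdiag (fun i : int => q ^ (i - 1))) LamInv)
  = Kmat e0 f0 (sdelta (- Q / s) 1).
Proof.
rewrite zmul_diag_l; apply: zmat_ext => i j; rewrite /zscale /LamInv /Kmat /sdelta.
have [->|ne] := eqVneq i (j + 1).
  rewrite lerDl ler01 addrK (_ : absz ((j + 1 - j)%R) = 1%N) /=; last by lia.
  rewrite mulr1 mul1r X2 qz -[s ^ (2 * j + 1)]szD expr1z.
  have := ef j; move: (e0 j) (f0 j) (s ^ (2 * j)) => E F S h.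
  have -> : E * (S * s) * F * (- Q / s) = E * F * (S * (- Q) * (s / s)) by ring.
  by rewrite h divff // mulr1 mul1r mulrC.
rewrite /= mulr0 mulr0; case: ifP => // hji.
have -> : (absz ((i - j)%R) == 1%N) = false by apply/negbTE; lia.
by rewrite mul0r mulr0.
Qed.

Lemma Y2_K : zscale (- Q) (zmul (zdiag (fun i : int => q ^ i)) LamInv)
  = Kmat e0 f0 (sdelta (- (Q * s)) 1).
Proof.
rewrite zmul_diag_l; apply: zmat_ext => i j; rewrite /zscale /LamInv /Kmat /sdelta.
have [->|ne] := eqVneq i (j + 1).
  rewrite lerDl ler01 (_ : absz ((j + 1 - j)%R) = 1%N) /=; last by lia.
  rewrite mulr1 mul1r X2 qz -[s ^ (2 * j + 1)]szD expr1z.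
  have -> : 2 * (j + 1) = 2 * j + 1 + 1 by ring.
  rewrite -!szD expr1z.
  have := ef j; move: (e0 j) (f0 j) (s ^ (2 * j)) => E F S h.
  have -> : E * (S * s) * F * - (Q * s) = E * F * (- Q * (S * s * s)) by ring.
  by rewrite h mul1r.
rewrite /= mulr0 mulr0; case: ifP => // hji.
have -> : (absz ((i - j)%R) == 1%N) = false by apply/negbTE; lia.
by rewrite mul0r mulr0.
Qed.

Lemma G_K (c : R) (Y : zmat R) : Y = Kmat e0 f0 (sdelta c 1) ->
  zseries (fun n => zpow Y n) = Kmat e0 f0 (geo c).
Proof.
move=> ->; rewrite -(zseries_K e0 f0 (geo c)); congr zseries.
by apply: functional_extensionality => n; rewrite (zpow_K _ _ fe).
Qed.

Lemma R1entry (G : zmat R) i j :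
  zmul (zsub Lam (zdiag (fun i : int => q ^ i))) G i j = G (i + 1) j - q ^ i * G i j.
Proof.
rewrite /zmul (@zsum_win _ _ i 2).
  rewrite big_ord_recr big_ord1 /= /zsub /Lam /zdiag addr0 eqxx.
  have -> : (i == i + 1) = false by apply/negbTE/eqP; lia.
  have -> : (i + 1%Z == i + 1) by apply/eqP.
  by rewrite subr0 mul1r sub0r mulNr addrC.
move=> k; case: (boolP ((i <= k) && (k < i + 2%:Z))) => // h.
rewrite /zsub /Lam /zdiag.
have -> : (k == i + 1) = false by apply/negbTE/eqP => e; move: h; rewrite e; lia.
have -> : (i == k) = false by apply/negbTE/eqP => e; move: h; rewrite e; lia.
by rewrite subrr mul0r eqxx.
Qed.

Lemma R2entry (G : zmat R) i j :
  zmul G (zsub Lam (zdiag (fun i : int => q ^ i))) i j = G i (j - 1) - G i j * q ^ j.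
Proof.
rewrite /zmul (@zsum_win _ _ (j - 1) 2).
  rewrite big_ord_recr big_ord1 /= /zsub /Lam /zdiag addr0.
  have -> : (j - 1 + 1%:Z) = j by ring.
  rewrite !eqxx.
  case: eqP => [e|_]; first by exfalso; lia.
  case: eqP => [e|_]; first by exfalso; lia.
  by rewrite subr0 mulr1 sub0r mulrN.
move=> k; case: (boolP ((j - 1 <= k) && (k < j - 1 + 2%:Z))) => // h.
rewrite /zsub /Lam /zdiag.
have -> : (j == k + 1) = false by apply/negbTE/eqP => e; move: h; rewrite e; lia.
have -> : (k == j) = false by apply/negbTE/eqP => e; move: h; rewrite e; lia.
by rewrite subrr mulr0 eqxx.
Qed.

Definition cseq := conv (d1 (- s)) (geo (- (Q * s))).

Lemma Lentry i j :
  zmul (zmul (Kmat e0 f0 (wseq q s Q)) Lam) (Kmat e0 f0 (vseq q s Q)) i j =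
  if j <= i + 1 then e0 i * f0 j * s ^ (2 * j - 1) * cseq (absz ((i + 1 - j)%R)) else 0.
Proof.
rewrite zmul_Lam_r /zmul.
case: ifP => hj; last first.
  rewrite (@zsum_win _ _ j 0) ?big_ord0 // => k.
  rewrite /Kmat; case: ifP => h1; last by rewrite mul0r eqxx.
  case: ifP => h2; last by rewrite mulr0 eqxx.
  by move: hj h1 h2; lia.
set m := absz ((i + 1 - j)%R).
have hm : i + 1 - j = m%:Z by rewrite /m gez0_abs; lia.
rewrite (@zsum_win _ _ j m.+1).
  rewrite /cseq -(wtv hs hq1) /conv big_distrr /=; apply: eq_bigr => t _.
  have ht := ltn_ord t.
  rewrite /Kmat.
  have -> : (j + t%:Z - 1 <= i) = true by apply/idP; lia.
  have -> : (j <= j + t%:Z) = true by apply/idP; lia.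
  have -> : absz ((i - (j + t%:Z - 1))%R) = (m - t)%N by lia.
  have -> : absz ((j + t%:Z - j)%R) = t by lia.
  rewrite /twist.
  transitivity (e0 i * f0 j * (f0 (j + t%:Z - 1) * e0 (j + t%:Z)) *
     (wseq q s Q (m - t)%N * vseq q s Q t)); first by ring.
  rewrite X1; ring.
move=> k; rewrite /Kmat; case: ifP => h1; last by rewrite mul0r eqxx.
case: ifP => h2; last by rewrite mulr0 eqxx.
by move=> _; apply/andP; split; lia.
Qed.

End Fin.

Unset Implicit Arguments.

Theorem mainTheorem6 (R : archiClosedFieldType) (q Q s : R)
  (hq0 : 0 < `|q|) (hq1 : `|q| < 1) (hQ0 : 0 < `|Q|) (hQ1 : `|Q| < 1)
  (hs : s ^+ 2 = q) :
  let D := zdiag (fun i : int => s ^ (i * i)) in            (* q^{Delta^2/2} *)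
  let Dm := zdiag (fun i : int => s ^ (- (i * i))) in       (* q^{-Delta^2/2} *)
  let W := zmul (zmul (zmul D (zinv (Gammap_minus s Q)))
                      (zinv (Gamma_minus s 1))) Dm in
  let L := zmul (zmul W Lam) (zinv W) in
  let qD := zdiag (fun i : int => q ^ i) in                 (* q^Delta *)
  let qDm1 := zdiag (fun i : int => q ^ (i - 1)) in         (* q^{Delta-1} *)
  L = zmul (zsub Lam qD)
           (zseries (fun n => zpow (zscale (- Q) (zmul qDm1 LamInv)) n))
  /\
  L = zmul (zseries (fun n => zpow (zscale (- Q) (zmul qD LamInv)) n))
           (zsub Lam qD).
Proof.
move=> D Dm W L qD qDm1.
have hs0 : s != 0.
  apply/eqP => e; move: hq0; rewrite -hs e expr0n /= normr0 ltxx //.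
have hW : W = Kmat (e0 s) (f0 s) (wseq q s Q) by rewrite /W /D /Dm (W_K Q hs hq1).
have hL : L = zmul (zmul (Kmat (e0 s) (f0 s) (wseq q s Q)) Lam) (Kmat (e0 s) (f0 s) (vseq q s Q)).
  by rewrite /L hW (Winv_K Q hs hq1 hs0).
have hG1 := G_K hs0 (Y1_K Q hs hq1 hs0).
have hG2 := G_K hs0 (Y2_K Q hs hq1 hs0).
have Kv : forall (e f : int -> R) c (i j : int) (n : nat), j <= i -> absz ((i - j)%R) = n ->
    Kmat e f c i j = e i * f j * c n.
  by move=> e f c i j n h hn; rewrite /Kmat h hn.
have Kz : forall (e f : int -> R) c (i j : int), i < j -> Kmat e f c i j = 0.
  by move=> e f c i j h; rewrite lower_K.
have E0 : forall i : int, e0 s i * f0 s (i + 1) * s ^ (2 * (i + 1) - 1) = 1.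
  move=> i; rewrite -(ef hs0 (i + 1)) (X2 hs0) (_ : 2 * (i + 1) - 1 = 2 * i + 1); last by ring.
  by ring.
have cs0 : cseq s Q 0 = 1 by rewrite /cseq conv_d1 /geo expr0.
have csS : forall n, cseq s Q n.+1 = (- (Q * s)) ^+ n.+1 - s * (- (Q * s)) ^+ n.
  by move=> n; rewrite /cseq conv_d1 /geo mulNr.
split.
- rewrite hL /qDm1 hG1 /qD; apply: zmat_ext => i j.
  rewrite (Lentry Q hs hq1 hs0) (R1entry hq1 hs0).
  case: ifP => hj; last first.
    by rewrite !Kz ?mulr0 ?subr0 //; move/negbT: hj; rewrite -ltNge //; lia.
  have [hji|hji] := leP j i; last first.
    have -> : j = i + 1 by lia.
    rewrite (@Kv _ _ _ (i + 1) (i + 1) 0) ?lexx ?subrr // Kz ?ltrDl // mulr0 subr0.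
    by rewrite /= cs0 mulr1 E0 /geo expr0 mulr1 (ef hs0).
  set n := absz ((i - j)%R).
  have hn : i = j + n%:Z by rewrite /n gez0_abs; lia.
  rewrite (@Kv _ _ _ (i + 1) j n.+1); [|lia|lia].
  rewrite (@Kv _ _ _ i j n); [|lia|lia].
  have -> : absz ((i + 1 - j)%R) = n.+1 by lia.
  rewrite csS (X2 hs0) (qz hs) /geo.
  have E1 : s ^ (2 * i + 1) = s ^ (2 * j - 1) * s ^+ (n.*2.+2).
    by rewrite -[s ^+ (n.*2.+2)]/(s ^ (Posz (n.*2.+2))) (szD hs0) hn; apply: sz; rewrite -addnn; lia.
  have E2 : s ^ (2 * i) = s ^ (2 * j - 1) * s ^+ (n.*2.+1).
    by rewrite -[s ^+ (n.*2.+1)]/(s ^ (Posz (n.*2.+1))) (szD hs0) hn; apply: sz; rewrite -addnn; lia.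
  rewrite E1 E2 !expr_div_n -mulNr !exprMn -!addnn !exprS !exprD.
  have hS : s ^+ n != 0 by rewrite expf_neq0.
  move: hS; move: (s ^+ n) (e0 s i) (f0 s j) (s ^ (2 * j - 1)) ((- Q) ^+ n) => S E F T A hS.
  by field; rewrite hs0 hS.
- rewrite hL hG2 /qD; apply: zmat_ext => i j.
  rewrite (Lentry Q hs hq1 hs0) (R2entry hq1 hs0).
  case: ifP => hj; last first.
    by rewrite !Kz ?mul0r ?subr0 //; move/negbT: hj; rewrite -ltNge //; lia.
  have [hji|hji] := leP j i; last first.
    have -> : j = i + 1 by lia.
    rewrite (@Kv _ _ _ i (i + 1 - 1) 0); [|lia|lia].
    rewrite Kz ?ltrDl // mul0r subr0 addrK.
    by rewrite subrr /= cs0 mulr1 E0 /geo expr0 mulr1 (ef hs0).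
  set n := absz ((i - j)%R).
  have hn : i = j + n%:Z by rewrite /n gez0_abs; lia.
  rewrite (@Kv _ _ _ i (j - 1) n.+1); [|lia|lia].
  rewrite (@Kv _ _ _ i j n); [|lia|lia].
  have -> : absz ((i + 1 - j)%R) = n.+1 by lia.
  rewrite csS (X4 hs0) (qz hs) /geo.
  have E1 : s ^ (2 * j) = s ^ (2 * j - 1) * s ^ 1.
    by rewrite (szD hs0); apply: sz; ring.
  rewrite E1 expr1z !exprS; ring.
Qed.
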